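(* In the public project problem with equal participation costs, there is no anonymous feasible Groves mechanism that welfare dominates the VCG mechanism.
   Context: Public project problem (equal participation costs): $n\ge2$ players, decisions $D=\{0,1\}$, $\Theta_i=[0,c]$ with $c>0$, $v_i(d,\theta_i)=d(\theta_i-c/n)$; efficient decision $f(\theta)=1$ iff $\sum_i\theta_i\ge c$. A Groves mechanism has taxes $t_i(\theta)=\sum_{j\ne i}v_j(f(\theta),\theta_j)+h_i(\theta_{-i})$ for arbitrary $h_i$; player $i$'s utility is $v_i(f(\theta),\theta_i)+t_i(\theta)$. It is anonymous if all $h_i$ equal one function $h:[0,c]^{n-1}\to\mathbb{R}$ symmetric in its arguments. The VCG (Clarke) mechanism uses $h_i(\theta_{-i})=-\max_{d\in D}\sum_{j\ne i}v_j(d,\theta_j)$. Feasible: $\sum_it_i(\theta)\le0$ for all $\theta$. $t'$ welfare dominates $t$ if $\sum_i t_i(\theta)\le\sum_i t'_i(\theta)$ for all $\theta$, strictly for some $\theta$. *)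

(* Defs.v *)
From Stdlib Require Import Reals List Permutation.
Import ListNotations.
Open Scope R_scope.

Definition sumR (l : list R) : R := fold_right Rplus 0 l.

Definition valid_profile (k : nat) (c : R) (th : list R) : Prop :=
  length th = k /\ Forall (fun x => 0 <= x <= c) th.

(* decisions D = {0,1} encoded as bool (true = 1) *)
Definition dval (d : bool) : R := if d then 1 else 0.

Definition v (n : nat) (c : R) (d : bool) (x : R) : R := dval d * (x - c / INR n).

Definition f (c : R) (th : list R) : bool :=
  if Rle_dec c (sumR th) then true else false.

Definition remove_nth (i : nat) (th : list R) : list R :=
  firstn i th ++ skipn (S i) th.

(* Anonymous Groves mechanism with common function h:
   t_i(theta) = sum_{j<>i} v_j(f theta, theta_j) + h(theta_{-i}) *)
Definition groves_tax (n : nat) (c : R) (h : list R -> R) (th : list R) (i : nat) : R :=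
  sumR (map (v n c (f c th)) (remove_nth i th)) + h (remove_nth i th).

Definition total_tax (n : nat) (c : R) (h : list R -> R) (th : list R) : R :=
  sumR (map (groves_tax n c h th) (seq 0 n)).

Definition vcg_h (n : nat) (c : R) (l : list R) : R :=
  - Rmax (sumR (map (v n c false) l)) (sumR (map (v n c true) l)).

Definition symmetric_h (n : nat) (c : R) (h : list R -> R) : Prop :=
  forall l1 l2, valid_profile (n - 1) c l1 -> valid_profile (n - 1) c l2 ->
    Permutation l1 l2 -> h l1 = h l2.

Definition feasible (n : nat) (c : R) (h : list R -> R) : Prop :=
  forall th, valid_profile n c th -> total_tax n c h th <= 0.

Definition welfare_dominates (n : nat) (c : R) (h' h : list R -> R) : Prop :=
  (forall th, valid_profile n c th -> total_tax n c h th <= total_tax n c h' th) /\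
  (exists th, valid_profile n c th /\ total_tax n c h th < total_tax n c h' th).

(* Main.v *)
Require Import Defs.
From Stdlib Require Import Reals List Permutation.
From Stdlib Require Import Lra Lia.
Import ListNotations.
Open Scope R_scope.

Fixpoint cnt (e : R) (l : list R) : nat :=
  match l with
  | [] => 0%nat
  | x :: l' => ((if Req_EM_T x e then 0 else 1) + cnt e l')%nat
  end.

Lemma sumR_cons x l : sumR (x :: l) = x + sumR l.
Proof. reflexivity. Qed.

Lemma rem_S j x l : remove_nth (S j) (x :: l) = x :: remove_nth j l.
Proof. reflexivity. Qed.

Lemma rem_0 x l : remove_nth 0 (x :: l) = l.
Proof. reflexivity. Qed.

Lemma rem_nil j : remove_nth j [] = [].
Proof. destruct j; reflexivity. Qed.

Lemma sumR_rem l : forall j, sumR (remove_nth j l) = sumR l - nth j l 0.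
Proof.
  induction l as [|a l IH]; intros [|j].
  - simpl. lra.
  - rewrite rem_nil. simpl. lra.
  - rewrite rem_0, sumR_cons. simpl. lra.
  - rewrite rem_S, !sumR_cons, IH. simpl. lra.
Qed.

Lemma rem_length l : forall j, (j < length l)%nat ->
  length (remove_nth j l) = (length l - 1)%nat.
Proof.
  induction l as [|a l IH]; intros [|j] Hj; simpl in Hj; try lia.
  - rewrite rem_0. simpl. lia.
  - rewrite rem_S. simpl. rewrite IH by lia. lia.
Qed.

Lemma Forall_rem (P : R -> Prop) l : forall j, Forall P l -> Forall P (remove_nth j l).
Proof.
  induction l as [|a l IH]; intros [|j] H.
  - constructor.
  - rewrite rem_nil; constructor.
  - rewrite rem_0. inversion H; auto.
  - rewrite rem_S. inversion H; subst. constructor; auto.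
Qed.

Lemma nth_range c l : 0 <= c -> Forall (fun x => 0 <= x <= c) l ->
  forall j, 0 <= nth j l 0 <= c.
Proof.
  intros Hc H. induction H as [|a l Ha Hl IH]; intros [|j]; simpl; auto; lra.
Qed.

Lemma cnt_rem e l : forall j, (j < length l)%nat ->
  (cnt e (remove_nth j l) + (if Req_EM_T (nth j l 0%R) e then 0%nat else 1%nat) = cnt e l)%nat.
Proof.
  induction l as [|a l IH]; intros [|j] Hj; simpl in Hj; try lia.
  - rewrite rem_0. simpl. lia.
  - rewrite rem_S. simpl. specialize (IH j ltac:(lia)). lia.
Qed.

Lemma perm_rem e l : forall j, (j < length l)%nat -> nth j l 0 = e ->
  Permutation l (e :: remove_nth j l).
Proof.
  induction l as [|a l IH]; intros [|j] Hj He; simpl in Hj; try lia.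
  - rewrite rem_0. simpl in He. subst. apply Permutation_refl.
  - rewrite rem_S. simpl in He.
    eapply perm_trans. apply perm_skip. apply (IH j); [lia|exact He].
    apply perm_swap.
Qed.

Lemma sumR_perm l1 l2 : Permutation l1 l2 -> sumR l1 = sumR l2.
Proof.
  induction 1; rewrite ?sumR_cons; lra.
Qed.

Lemma vcg_sym n c l1 l2 : Permutation l1 l2 -> vcg_h n c l1 = vcg_h n c l2.
Proof.
  intros H. unfold vcg_h.
  rewrite (sumR_perm _ _ (Permutation_map (v n c false) H)).
  rewrite (sumR_perm _ _ (Permutation_map (v n c true) H)). reflexivity.
Qed.

Lemma sum_v_false n c l : sumR (map (v n c false) l) = 0.
Proof.
  induction l; simpl map; rewrite ?sumR_cons; [reflexivity|].
  rewrite IHl. unfold v, dval. lra.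
Qed.

Lemma sum_v_true n c l :
  sumR (map (v n c true) l) = sumR l - INR (length l) * (c / INR n).
Proof.
  induction l; simpl map; simpl length; rewrite ?sumR_cons.
  - simpl. lra.
  - rewrite IHl, S_INR. unfold v, dval. ring.
Qed.

Lemma diff_id n c h h' th : forall s,
  sumR (map (groves_tax n c h th) s) - sumR (map (groves_tax n c h' th) s)
  = sumR (map (fun i => h (remove_nth i th) - h' (remove_nth i th)) s).
Proof.
  induction s; simpl map; rewrite ?sumR_cons.
  - simpl. lra.
  - rewrite <- IHs. unfold groves_tax. lra.
Qed.

Lemma sum_zero (F : nat -> R) s : (forall i, In i s -> F i = 0) -> sumR (map F s) = 0.
Proof.
  induction s; intros H; simpl map; rewrite ?sumR_cons; [reflexivity|].
  rewrite H by (left; auto). rewrite IHs by (intros; apply H; right; auto). lra.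
Qed.

Lemma sum_scalar (F : nat -> R) a s : (forall i, In i s -> F i = a \/ F i = 0) ->
  exists K, 0 <= K /\ sumR (map F s) = K * a.
Proof.
  induction s; intros H; simpl map.
  - exists 0. simpl. lra.
  - destruct IHs as [K [HK HS]]. intros; apply H; right; auto.
    rewrite sumR_cons, HS.
    destruct (H a0 ltac:(left; auto)) as [E|E]; rewrite E.
    + exists (K + 1). split; [lra|ring].
    + exists K. split; [lra|ring].
Qed.

Lemma vcg_zero n c th : valid_profile n c th ->
  ((c <= sumR th /\ forall i, (i < n)%nat -> INR (n-1) * (c / INR n) <= sumR th - nth i th 0)
   \/ (sumR th < c /\ forall i, (i < n)%nat -> sumR th - nth i th 0 <= INR (n-1) * (c / INR n))) ->
  total_tax n c (vcg_h n c) th = 0.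
Proof.
  intros [Hl Hf] Hreg. unfold total_tax. apply sum_zero. intros i Hi.
  apply in_seq in Hi. unfold groves_tax, vcg_h, Defs.f.
  rewrite sum_v_false, sum_v_true, rem_length, sumR_rem, Hl by lia.
  destruct Hreg as [[H1 H2]|[H1 H2]].
  - specialize (H2 i ltac:(lia)).
    destruct (Rle_dec c (sumR th)); [|lra].
    rewrite sum_v_true, rem_length, sumR_rem, Hl by lia.
    unfold Rmax; destruct Rle_dec; lra.
  - specialize (H2 i ltac:(lia)).
    destruct (Rle_dec c (sumR th)); [lra|].
    rewrite sum_v_false.
    unfold Rmax; destruct Rle_dec; lra.
Qed.

Lemma core n c (h : list R -> R) (e : R) (Q : list R -> Prop)
  (Hn : (2 <= n)%nat) (Hc : 0 < c) (He : 0 <= e <= c)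
  (Hsym : symmetric_h n c h)
  (Hzero : forall th, valid_profile n c th -> total_tax n c (vcg_h n c) th = 0 ->
     sumR (map (fun i => h (remove_nth i th) - vcg_h n c (remove_nth i th)) (seq 0 n)) = 0)
  (HQp : forall l j, valid_profile (n-1) c l -> Q l -> Q (e :: remove_nth j l))
  (HQz : forall l, valid_profile (n-1) c l -> Q l -> total_tax n c (vcg_h n c) (e :: l) = 0) :
  forall k l, (cnt e l < k)%nat -> valid_profile (n-1) c l -> Q l ->
    h l - vcg_h n c l = 0.
Proof.
  induction k as [|k IH]; intros l Hk Hv HQ; [lia|].
  destruct n as [|m]; [lia|].
  assert (Hv' : valid_profile (S m) c (e :: l)).
  { destruct Hv as [Hl Hf]. split; [simpl; lia|constructor; auto]. }
  pose proof (Hzero _ Hv' (HQz l Hv HQ)) as Hs.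
  change (seq 0 (S m)) with (0%nat :: seq 1 m) in Hs.
  replace (seq 1 m) with (map S (seq 0 m)) in Hs by apply seq_shift.
  change (map ?F (0%nat :: ?s)) with (F 0%nat :: map F s) in Hs.
  rewrite map_map in Hs. cbv beta in Hs.
  rewrite sumR_cons, rem_0 in Hs.
  destruct (sum_scalar (fun j => h (remove_nth (S j) (e :: l)) - vcg_h (S m) c (remove_nth (S j) (e :: l)))
              (h l - vcg_h (S m) c l) (seq 0 m)) as [K [HK HS]].
  { intros j Hj. apply in_seq in Hj. rewrite rem_S.
    destruct Hv as [Hl Hf]. simpl in Hl.
    assert (Hvj : valid_profile (S m - 1) c (e :: remove_nth j l)).
    { split.
      - simpl. rewrite rem_length by lia. lia.
      - constructor; [exact He|]. apply Forall_rem; auto. }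
    destruct (Req_EM_T (nth j l 0) e) as [Eq|Ne].
    - left. pose proof (perm_rem e l j ltac:(lia) Eq) as P.
      rewrite (Hsym _ _ (conj Hl Hf) Hvj P), (vcg_sym _ _ _ _ P). reflexivity.
    - right. apply IH; auto.
      + pose proof (cnt_rem e l j ltac:(lia)) as Hc'.
        destruct (Req_EM_T (nth j l 0) e); [contradiction|].
        simpl. destruct (Req_EM_T e e); [|congruence]. lia.
      + apply HQp; auto. split; auto. }
  rewrite HS in Hs.
  assert (H1 : (1 + K) * (h l - vcg_h (S m) c l) = 0) by lra.
  apply Rmult_integral in H1. destruct H1; lra.
Qed.

Theorem lemma3 (n : nat) (c : R) (Hn : (2 <= n)%nat) (Hc : 0 < c) :
  ~ (exists h : list R -> R,
       symmetric_h n c h /\ feasible n c h /\ welfare_dominates n c h (vcg_h n c)).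
Proof.
  intros [h [Hsym [Hfeas [Hdom Hstrict]]]].
  assert (Hnpos : 0 < INR n) by (apply lt_0_INR; lia).
  assert (HK : INR (n-1) * (c / INR n) = c - c / INR n).
  { rewrite minus_INR by lia. simpl. field. lra. }
  assert (Hcn : 0 < c / INR n) by (apply Rdiv_lt_0_compat; lra).
  assert (Hcn2 : c / INR n <= c).
  { assert (H2 : 1 <= INR n) by (apply (le_INR 1); lia).
    apply (Rmult_le_reg_r (INR n)); [lra|]. unfold Rdiv. rewrite Rmult_assoc, Rinv_l by lra. nra. }
  set (K := INR (n-1) * (c / INR n)) in *.
  assert (Hzero : forall th, valid_profile n c th -> total_tax n c (vcg_h n c) th = 0 ->
     sumR (map (fun i => h (remove_nth i th) - vcg_h n c (remove_nth i th)) (seq 0 n)) = 0).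
  { intros th Hv H0. rewrite <- (diff_id n c h (vcg_h n c) th). fold (total_tax n c h th).
    fold (total_tax n c (vcg_h n c) th).
    pose proof (Hdom th Hv). pose proof (Hfeas th Hv). lra. }
  assert (Hg : forall l, valid_profile (n-1) c l -> h l - vcg_h n c l = 0).
  { intros l Hv.
    pose proof (nth_range c l ltac:(lra) (proj2 Hv)) as Hr.
    destruct (Rle_or_lt K (sumR l)) as [HA|HB].
    - apply (core n c h c (fun l => K <= sumR l) Hn Hc ltac:(lra) Hsym Hzero)
        with (k := S (cnt c l)); auto.
      + intros l' j Hv' HQ. rewrite sumR_cons, sumR_rem.
        pose proof (nth_range c l' ltac:(lra) (proj2 Hv') j). lra.
      + intros l' Hv' HQ. apply vcg_zero.
        * destruct Hv' as [H1 H2]. split; [simpl; lia|constructor; auto; lra].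
        * left. rewrite sumR_cons. split; [lra|].
          intros [|i] Hi; simpl nth; fold K; [lra|].
          pose proof (nth_range c l' ltac:(lra) (proj2 Hv') i). lra.
    - apply (core n c h 0 (fun l => sumR l < K) Hn Hc ltac:(lra) Hsym Hzero)
        with (k := S (cnt 0 l)); auto.
      + intros l' j Hv' HQ. rewrite sumR_cons, sumR_rem.
        pose proof (nth_range c l' ltac:(lra) (proj2 Hv') j). lra.
      + intros l' Hv' HQ. apply vcg_zero.
        * destruct Hv' as [H1 H2]. split; [simpl; lia|constructor; auto; lra].
        * right. rewrite sumR_cons. split; [lra|].
          intros [|i] Hi; simpl nth; fold K; [lra|].
          pose proof (nth_range c l' ltac:(lra) (proj2 Hv') i). lra. }
  destruct Hstrict as [th [Hv Hlt]].
  assert (E : total_tax n c h th - total_tax n c (vcg_h n c) th = 0).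
  { unfold total_tax. rewrite diff_id. apply sum_zero. intros i Hi.
    apply in_seq in Hi. destruct Hv as [Hl Hf]. apply Hg. split.
    - rewrite rem_length; lia.
    - apply Forall_rem; auto. }
  lra.
Qed.
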